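(* Let $\mathcal{P}$ be a finite poset with $p$ elements. The order cone $\mathcal{C}(\mathcal{P})\subset\mathbb{R}^{\mathcal{P}}\cong\mathbb{R}^p$ is simplicial if and only if the Hasse diagram of $\mathcal{P}$ does not contain any collider.
   Context: For a finite poset $\mathcal{P}$, $\mathbb{R}^{\mathcal{P}}$ is the space of real functions on $\mathcal{P}$. The order cone $\mathcal{C}(\mathcal{P})$ is the set of all $\mathbf{f}\in\mathbb{R}^{\mathcal{P}}$ with $f_x\ge 0$ for all $x\in\mathcal{P}$ and $f_x\le f_y$ whenever $x\preceq y$. An element $y$ covers $x$, written $x\lessdot y$, if $x\prec y$ and there is no $z$ with $x\prec z\prec y$. The Hasse diagram of $\mathcal{P}$ is the directed graph on $\mathcal{P}$ with an edge $x\to y$ iff $x\lessdot y$. A collider is a set of three distinct elements $a,b,c$ with $a\lessdot c$ and $b\lessdot c$. A cone in $\mathbb{R}^p$ is simplicial if it is the conical hull of $p$ linearly independent vectors. *)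

(* Defs.v *)
From HB Require Import structures.
From mathcomp Require Import all_boot all_order all_algebra.
From mathcomp Require Import reals.
Set Implicit Arguments. Unset Strict Implicit. Unset Printing Implicit Defensive.
Import Order.TTheory GRing.Theory Num.Theory.
Local Open Scope order_scope.

Section Defs.
Context {d : Order.disp_t} {T : finPOrderType d}.

Definition covers (x y : T) : Prop :=
  x < y /\ ~ (exists z : T, x < z /\ z < y).

Definition collider (a b c : T) : Prop :=
  [/\ a != b, a != c, b != c, covers a c & covers b c].

Definition has_collider : Prop := exists a b c : T, collider a b c.

Local Open Scope ring_scope.
Context {R : realType}.

Definition order_cone : (T -> R) -> Prop := fun f =>
  (forall x, 0 <= f x) /\ (forall x y : T, (x <= y)%O -> f x <= f y).

Definition lin_indep (n : nat) (v : 'I_n -> T -> R) : Prop :=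
  forall c : 'I_n -> R, (forall x : T, \sum_(i < n) c i * v i x = 0) ->
    forall i, c i = 0.

Definition conical_hull (n : nat) (v : 'I_n -> T -> R) : (T -> R) -> Prop :=
  fun f => exists c : 'I_n -> R, (forall i, 0 <= c i) /\
    (forall x : T, f x = \sum_(i < n) c i * v i x).

Definition simplicial (K : (T -> R) -> Prop) : Prop :=
  exists v : 'I_#|T| -> T -> R, lin_indep v /\
    (forall f, K f <-> conical_hull v f).
End Defs.

(* Main.v *)
Require Import Defs.
From mathcomp Require Import all_boot all_order all_algebra reals.
From mathcomp Require Import lra.
Set Implicit Arguments. Unset Strict Implicit. Unset Printing Implicit Defensive.
Import Order.TTheory GRing.Theory Num.Theory.

Section Proofs.
Context {d : Order.disp_t} {T : finPOrderType d}.

Definition covb (w y : T) : bool :=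
  (w < y)%O && [forall z, ~~ ((w < z)%O && (z < y)%O)].

Lemma covbP w y : covers w y <-> covb w y.
Proof.
split.
- move=> [wy nz]; apply/andP; split => //; apply/forallP => z; apply/negP => H.
  by apply: nz; exists z; apply/andP.
- move=> /andP[wy /forallP H]; split => // [[z [wz zy]]].
  by move: (H z); rewrite wz zy.
Qed.

Definition mlt (y : T) : nat := #|[set z | (z < y)%O]|.

Lemma mlt_lt z y : (z < y)%O -> (mlt z < mlt y)%N.
Proof.
move=> zy; apply: proper_card; apply/properP; split.
  by apply/subsetP => t; rewrite !inE => tz; exact: lt_trans tz zy.
by exists z; rewrite !inE ?ltxx.
Qed.

Definition mgt (y : T) : nat := #|[set z | (y < z)%O]|.

Lemma mgt_lt z y : (z < y)%O -> (mgt y < mgt z)%N.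
Proof.
move=> zy; apply: proper_card; apply/properP; split.
  by apply/subsetP => t; rewrite !inE => tz; exact: lt_trans zy tz.
by exists y; rewrite !inE ?ltxx.
Qed.

Lemma exists_cover (z y : T) : (z < y)%O -> exists w, (z <= w)%O /\ covb w y.
Proof.
move=> zy.
pose Q := [pred u | (z <= u)%O && (u < y)%O].
have P0 : Q z by rewrite /Q inE lexx zy.
case: (arg_minnP mgt P0) => w /andP[zw wy] Hmin.
exists w; split => //; apply/covbP; split => // [[u [wu uy]]].
have := Hmin u; rewrite /Q inE (le_trans zw (ltW wu)) uy => /(_ isT).
by rewrite leqNgt (mgt_lt wu).
Qed.

Lemma strong_ind (P : T -> Prop) :
  (forall y, (forall z, (z < y)%O -> P z) -> P y) -> forall y, P y.
Proof.
move=> H y; move: {2}(mlt y) (leqnn (mlt y)) => n; elim: n y => [|n IH] y Hy.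
  apply: H => z zy; have := mlt_lt zy; by rewrite ltnNge (leq_trans Hy).
apply: H => z zy; apply: IH; have := mlt_lt zy => h.
by rewrite -ltnS (leq_trans h).
Qed.


Local Open Scope ring_scope.
Context {R : realType}.

Lemma sum_indic (F : T -> R) y :
  \sum_x F x * ((x <= y)%O)%:R = \sum_(x | (x <= y)%O) F x.
Proof.
rewrite [RHS]big_mkcond /=; apply: eq_bigr => x _; rewrite mulr_natr mulrb.
by [].
Qed.

Lemma sum_le_split (F : T -> R) y :
  \sum_(x | (x <= y)%O) F x = F y + \sum_(x | (x < y)%O) F x.
Proof.
rewrite (bigD1 y) ?lexx //=; congr (_ + _); apply: eq_bigl => x.
by rewrite lt_neqAle andbC.
Qed.

Lemma enum_sum (F : T -> R) :
  \sum_(i < #|T|) F (enum_val i) = \sum_x F x.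
Proof. by rewrite -big_enum_val /=; apply: eq_bigl => x; rewrite inE. Qed.

Section NoCol.
Hypothesis nocol : ~ has_collider (T := T).

Lemma cov_uniq w w' y : covb w y -> covb w' y -> w = w'.
Proof.
move=> h h'; apply/eqP; apply/negP => /negP ne; apply: nocol.
exists w, w', y; split => //; try by apply/covbP.
- by move: h => /andP[/lt_eqF ->].
- by move: h' => /andP[/lt_eqF ->].
Qed.

Definition par (y : T) := [pick w | covb w y].

Lemma par_some y p : par y = Some p -> forall x, (x < y)%O = (x <= p)%O.
Proof.
rewrite /par; case: pickP => // w hw [<-] x.
apply/idP/idP.
- move=> /exists_cover [w' [xw' cw']]; by rewrite -(cov_uniq cw' hw).
- move=> xw; move: hw => /andP[wy _]; exact: le_lt_trans xw wy.
Qed.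

Lemma par_none y : par y = None -> forall x, ~~ (x < y)%O.
Proof.
rewrite /par; case: pickP => // H _ x; apply/negP => /exists_cover [w [_ cw]].
by move: (H w); rewrite cw.
Qed.

Variable f : T -> R.
Definition cf (y : T) : R := if par y is Some p then f y - f p else f y.

Lemma cf_sum y : f y = \sum_(x | (x <= y)%O) cf x.
Proof.
elim/strong_ind: y => y IH; rewrite sum_le_split /cf.
case E: (par y) => [p|].
- rewrite (eq_bigl (fun x => (x <= p)%O)); last by move=> x; rewrite (par_some E).
  rewrite -IH; first by rewrite subrK.
  by rewrite (par_some E).
- rewrite big_pred0 ?addr0 // => x; exact/negbTE/(par_none E).
Qed.

End NoCol.

Definition upv (i : 'I_#|T|) (y : T) : R := ((enum_val i <= y)%O)%:R.

Lemma upv_indep : lin_indep upv.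
Proof.
move=> c H.
pose c' x := c (enum_rank x).
have H' : forall y, \sum_(x | (x <= y)%O) c' x = 0.
  move=> y; rewrite -sum_indic -[RHS](H y) -enum_sum; apply: eq_bigr => i _.
  by rewrite /c' enum_valK.
have Z : forall y, c' y = 0.
  elim/strong_ind => y IH; have := H' y; rewrite sum_le_split big1 ?addr0 //.
move=> i; by rewrite -(enum_valK i) -/(c' _) Z.
Qed.

Lemma hull_up_cone f : conical_hull upv f -> order_cone f.
Proof.
move=> [c [c0 Hf]]; split.
- move=> x; rewrite Hf; apply: sumr_ge0 => i _; apply: mulr_ge0 => //.
- move=> x y xy; rewrite !Hf; apply: ler_sum => i _; apply: ler_wpM2l => //.
  rewrite /upv; case: (boolP (enum_val i <= x)%O) => h.
    by rewrite (le_trans h xy).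
  by rewrite ler_nat.
Qed.

Lemma cone_hull_up : ~ has_collider (T := T) -> forall f, order_cone f -> conical_hull upv f.
Proof.
move=> nc f [f0 fm]; exists (fun i => cf f (enum_val i)); split.
- move=> i; rewrite /cf; case E: (par _) => [p|] //.
  rewrite subr_ge0; apply: fm; move: E; rewrite /par; case: pickP => // w /andP[h _] [<-].
  exact: ltW.
- move=> y; rewrite (cf_sum nc f y) -sum_indic -enum_sum //.
Qed.

Lemma nocol_simplicial : ~ has_collider (T := T) -> simplicial (@order_cone d T R).
Proof.
move=> nc; exists upv; split; first exact: upv_indep.
move=> f; split; [exact: cone_hull_up | exact: hull_up_cone].
Qed.


Lemma up_cone (U : pred T) :
  (forall x y, (x <= y)%O -> U x -> U y) -> order_cone (fun y => ((U y)%:R : R)).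
Proof.
move=> H; split; first by move=> x; exact: ler0n.
move=> x y xy; case Ux: (U x); first by rewrite (H _ _ xy Ux).
by rewrite ler_nat.
Qed.

Lemma hull_split n (v : 'I_n -> T -> R) f phi
  (Hh : forall f, order_cone f <-> conical_hull v f)
  (phi0 : forall i, 0 <= phi i) (Hf : forall y, f y = \sum_(i < n) phi i * v i y) k :
  order_cone (fun y => phi k * v k y) /\ order_cone (fun y => f y - phi k * v k y).
Proof.
split; apply/Hh.
- exists (fun i => if i == k then phi k else 0); split.
    by move=> i; case: eqP.
  move=> y; rewrite (bigD1 k) //= eqxx big1 ?addr0 // => i /negbTE ->.
  by rewrite mul0r.
- exists (fun i => if i == k then 0 else phi i); split.
    by move=> i; case: eqP.
  move=> y; rewrite Hf (bigD1 k) //= [in RHS](bigD1 k) //= eqxx mul0r add0r.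
  rewrite [X in X - _]addrC addrK; apply: eq_bigr => i /negbTE -> //.
Qed.

Lemma coef_eq n (v : 'I_n -> T -> R) (al be : 'I_n -> R) :
  lin_indep v -> (forall y, \sum_(i < n) al i * v i y = \sum_(i < n) be i * v i y) ->
  forall i, al i = be i.
Proof.
move=> Hli H i; apply/eqP; rewrite -subr_eq0; apply/eqP.
apply: (Hli (fun i => al i - be i)) => y.
under eq_bigr do rewrite mulrBl.
by rewrite sumrB H subrr.
Qed.

Lemma final_ineq (x y z w s : R) : x*s <= 0 -> y*s<=0 -> 0<s -> 0<z -> x+y = z+w ->
  0<=w -> 0<=x -> 0<=y -> False.
Proof. move=> *; nra. Qed.

Lemma collider_not_simplicial (a b c : T) :
  collider (T := T) a b c -> ~ simplicial (@order_cone d T R).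
Proof.
move=> [nab nac nbc /covbP cac /covbP cbc] [v [Hli Hh]].
have nleab : ~~ (a <= b)%O.
  apply/negP => ab; have ab' : (a < b)%O by rewrite lt_neqAle nab.
  move: cac => /andP[_ /forallP /(_ b)]; move: cbc => /andP[-> _].
  by rewrite ab'.
have nleba : ~~ (b <= a)%O.
  apply/negP => ba; have ba' : (b < a)%O by rewrite lt_neqAle eq_sym nab.
  move: cbc => /andP[_ /forallP /(_ a)]; move: cac => /andP[-> _].
  by rewrite ba'.
have ac : (a <= c)%O by move: cac => /andP[/ltW].
have bc : (b <= c)%O by move: cbc => /andP[/ltW].
pose A := fun y => (((a <= y)%O)%:R : R).
pose B := fun y => (((b <= y)%O)%:R : R).
pose M := fun y => ((((a <= y)%O || (b <= y)%O))%:R : R).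
pose N := fun y => ((((a <= y)%O && (b <= y)%O))%:R : R).
have cA : order_cone A by apply: up_cone => x y xy h; exact: le_trans h xy.
have cB : order_cone B by apply: up_cone => x y xy h; exact: le_trans h xy.
have cM : order_cone M.
  apply: up_cone => x y xy /orP[h|h]; apply/orP; [left|right]; exact: le_trans h xy.
have cN : order_cone N.
  by apply: up_cone => x y xy /andP[h h']; apply/andP; split; apply: le_trans xy.
have [al [al0 HA]] := (Hh _).1 cA.
have [be [be0 HB]] := (Hh _).1 cB.
have [mu [mu0 HM]] := (Hh _).1 cM.
have [nu [nu0 HN]] := (Hh _).1 cN.
have E : forall i, al i + be i = mu i + nu i.
  apply: (@coef_eq _ v (fun i => al i + be i) (fun i => mu i + nu i) Hli) => y /=.
  under eq_bigr do rewrite mulrDl.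
  under [RHS]eq_bigr do rewrite mulrDl.
  rewrite !big_split /= -HA -HB -HM -HN /A /B /M /N /=.
  by case: (a <= y)%O; case: (b <= y)%O; rewrite /= ?addr0 ?add0r.
have [k mk] : exists k, 0 < mu k.
  case: (pickP (fun k => 0 < mu k)) => [k mk|H]; first by exists k.
  have : M c = 0.
    rewrite HM big1 // => i _.
    have : mu i = 0 by apply/eqP; rewrite eq_le mu0 andbT leNgt H.
    by move=> ->; rewrite mul0r.
  by move=> /eqP; rewrite /M /= ac /= pnatr_eq0.
pose g := fun y => mu k * v k y.
have [cg ch] := hull_split Hh mu0 HM k.
have [g0 gm] := cg; have [h0 hm] := ch.
have Mconst : forall x y, (x <= y)%O -> M x = 1 -> M y = 1 -> g x = g y.
  move=> x y xy Mx My; have := gm x y xy; have := hm x y xy.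
  rewrite /g Mx My => h1 h2; lra.
have Ma : M a = 1 by rewrite /M lexx.
have Mb : M b = 1 by rewrite /M lexx orbT.
have Mc : M c = 1 by rewrite /M ac.
have gext : forall y, g y = g c * M y.
  move=> y; case ay: (a <= y)%O.
    have My : M y = 1 by rewrite /M ay.
    by rewrite My mulr1 -(Mconst _ _ ay Ma My) (Mconst _ _ ac Ma Mc).
  case by': (b <= y)%O.
    have My : M y = 1 by rewrite /M by' orbT.
    by rewrite My mulr1 -(Mconst _ _ by' Mb My) (Mconst _ _ bc Mb Mc).
  have My : M y = 0 by rewrite /M ay by'.
  rewrite My mulr0; have := g0 y; have := h0 y; rewrite My /g => h1 h2; lra.
pose t := g c.
have t0 : 0 < t.
  rewrite lt_def g0 andbT; apply/negP => /eqP t0.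
  have : mu k = 0.
    suff /(_ k) : forall i, (if i == k then mu k else 0) = 0 by rewrite eqxx.
    apply: Hli => y.
    rewrite (bigD1 k) //= eqxx big1 ?addr0.
      by have := gext y; rewrite -/t t0 mul0r.
    by move=> i /negbTE ->; rewrite mul0r.
  by move=> mk0; move: mk; rewrite mk0 ltxx.
have gb : mu k * v k b = t by have := gext b; rewrite Mb mulr1.
have ga : mu k * v k a = t by have := gext a; rewrite Ma mulr1.
have Ek := E k; have nuk := nu0 k; have alk := al0 k; have bek := be0 k.
have [_ [hA _]] := hull_split Hh al0 HA k.
have [_ [hB _]] := hull_split Hh be0 HB k.
have hAb := hA b; have hBa := hB a.
rewrite /A (negbTE nleab) in hAb; rewrite /B (negbTE nleba) in hBa.
have kA : al k * v k b <= 0 by move: hAb; rewrite /= subr_ge0.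
have kB : be k * v k a <= 0 by move: hBa; rewrite /= subr_ge0.
have e1 : al k * t <= 0.
  by rewrite -gb mulrCA; apply: mulr_ge0_le0 => //; exact: ltW.
have e2 : be k * t <= 0.
  by rewrite -ga mulrCA; apply: mulr_ge0_le0 => //; exact: ltW.
exact: (final_ineq e1 e2 t0 mk Ek nuk alk bek).
Qed.


End Proofs.

Theorem theorem2 (d : Order.disp_t) (T : finPOrderType d) (R : realType) :
  simplicial (@order_cone d T R) <-> ~ has_collider (T := T).
Proof.
split.
- move=> S [a [b [c H]]]; exact: (collider_not_simplicial H S).
- exact: nocol_simplicial.
Qed.
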